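(* Let $f\ge1$, $\lambda_1=\lambda_2=\dots=\lambda_f<1$ be positive reals, $\mu_1,\dots,\mu_f\in\mathbb C$, $\eta\in(-1,1)$, $u\in\mathbb R$, and $$g(s):=e^{\left(u+i\frac{\pi f}{4}\eta\right)(1/2-s)}\prod_{j=1}^f\Gamma(\lambda_js+\mu_j).$$ Let $\rho$ be a pole of $g$ of order $n$ such that $\Re(\lambda_j\rho+\mu_j)\le0$ for $j=1,\dots,f$ and $$\frac{e^{u/\lambda_1}}{\prod_{j=1}^f\left(|1-\lambda_j\rho-\mu_j|-\lambda_j\right)}<\frac12.$$ Let $c_1,\dots,c_n$ be the coefficients of the polar part of $g$ at $\rho$, so that $g(s+\rho)-\sum_{j=1}^nc_js^{-j}$ is holomorphic at $s=0$. Then $$\left|\sum_{l=1}^\infty\operatorname{Res}_{s=\rho-l/\lambda_1}g(s)\right|<\max_j|c_j|.$$ *)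

(* Defs.v *)
From Stdlib Require Import Reals Factorial ClassicalEpsilon.
From Coquelicot Require Import Coquelicot.
Open Scope R_scope.

Definition Cexp (z : C) : C :=
  (exp (Re z) * cos (Im z), exp (Re z) * sin (Im z)).

Fixpoint Cprod1 (f : nat) (F : nat -> C) : C :=
  match f with
  | O => RtoC 1
  | S k => Cmult (Cprod1 k F) (F (S k))
  end.

Fixpoint Csum1 (n : nat) (F : nat -> C) : C :=
  match n with
  | O => RtoC 0
  | S k => Cplus (Csum1 k F) (F (S k))
  end.

Fixpoint Rprod1 (f : nat) (F : nat -> R) : R :=
  match f with
  | O => 1
  | S k => Rprod1 k F * F (S k)
  end.

Fixpoint Rmax1 (n : nat) (F : nat -> R) : R :=
  match n with
  | O => 0
  | S O => F 1%nat
  | S k => Rmax (Rmax1 k F) (F (S k))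
  end.

Definition Gamma_seq (s : C) (n : nat) : C :=
  Cdiv (Cmult (Cexp (Cmult s (RtoC (ln (INR n))))) (RtoC (INR (fact n))))
       (Cmult (Cprod1 n (fun k => Cplus s (RtoC (INR (k - 1))))) (Cplus s (RtoC (INR n)))).

(* Complex Gamma function, defined by Gauss' limit formula
   Gamma(s) = lim_{n -> oo} n^s n! / (s(s+1)...(s+n)), valid off the poles
   s = 0,-1,-2,...; at the poles the value is an arbitrary (irrelevant) junk value. *)
Definition CGamma (s : C) : C :=
  epsilon (inhabits (RtoC 0))
    (fun v => filterlim (Gamma_seq s) eventually (locally v)).

Definition C_differentiable_at (h : C -> C) (z : C) : Prop :=
  exists l : C, forall eps : R, 0 < eps -> exists d : R, 0 < d /\
    forall w : C, 0 < Cmod w < d ->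
      Cmod (Cminus (Cdiv (Cminus (h (Cplus z w)) (h z)) w) l) < eps.

Definition holomorphic_at (h : C -> C) (z0 : C) : Prop :=
  exists r : R, 0 < r /\ forall z : C, Cmod (Cminus z z0) < r -> C_differentiable_at h z.

Definition polar_part (g : C -> C) (z0 : C) (N : nat) (c : nat -> C) : Prop :=
  exists (h : C -> C) (d : R), 0 < d /\ holomorphic_at h (RtoC 0) /\
    forall s : C, 0 < Cmod s < d ->
      g (Cplus s z0) = Cplus (Csum1 N (fun j => Cdiv (c j) (Cpow s j))) (h s).

Definition pole_of_order (g : C -> C) (rho : C) (n : nat) (c : nat -> C) : Prop :=
  (1 <= n)%nat /\ c n <> RtoC 0 /\ polar_part g rho n c.

Definition is_residue (g : C -> C) (z0 : C) (r : C) : Prop :=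
  exists (N : nat) (c : nat -> C), polar_part g z0 N c /\
    (match N with O => r = RtoC 0 | S _ => r = c 1%nat end).

(* Main.v *)
Require Import Defs.
From Stdlib Require Import Reals Factorial ZArith Lra Lia Psatz ClassicalEpsilon FunctionalExtensionality.
From Coquelicot Require Import Coquelicot.
Open Scope R_scope.

Definition clim (A : C -> C) (a : C) : Prop :=
  forall eps : R, 0 < eps -> exists d : R, 0 < d /\
    forall w : C, 0 < Cmod w < d -> Cmod (Cminus (A w) a) < eps.

Lemma Cmod_minus_sym (a b : C) : Cmod (Cminus a b) = Cmod (Cminus b a).
Proof.
  replace (Cminus a b) with (Copp (Cminus b a)) by ring. apply Cmod_opp.
Qed.

Lemma Cmod_tri_minus (a b c : C) : Cmod (Cminus a c) <= Cmod (Cminus a b) + Cmod (Cminus b c).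
Proof.
  replace (Cminus a c) with (Cplus (Cminus a b) (Cminus b c)) by ring. apply Cmod_triangle.
Qed.

Lemma clim_const (a : C) : clim (fun _ => a) a.
Proof.
  intros eps He. exists 1. split; [lra|]. intros w _.
  replace (Cminus a a) with (RtoC 0) by ring. rewrite Cmod_0. lra.
Qed.

Lemma clim_id : clim (fun w => w) (RtoC 0).
Proof.
  intros eps He. exists eps. split; [lra|]. intros w Hw.
  replace (Cminus w 0) with w by ring. lra.
Qed.

Lemma clim_ext (A B : C -> C) (a : C) (d0 : R) : 0 < d0 ->
  (forall w, 0 < Cmod w < d0 -> A w = B w) -> clim A a -> clim B a.
Proof.
  intros Hd0 HAB HA eps He. destruct (HA eps He) as [d [Hd H]].
  exists (Rmin d d0). split. apply Rmin_pos; lra.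
  intros w Hw. rewrite <- HAB. apply H.
  split. lra. eapply Rlt_le_trans. apply Hw. apply Rmin_l.
  split. lra. eapply Rlt_le_trans. apply Hw. apply Rmin_r.
Qed.

Lemma clim_plus (A B : C -> C) (a b : C) : clim A a -> clim B b ->
  clim (fun w => Cplus (A w) (B w)) (Cplus a b).
Proof.
  intros HA HB eps He.
  destruct (HA (eps/2)) as [d1 [Hd1 H1]]; [lra|].
  destruct (HB (eps/2)) as [d2 [Hd2 H2]]; [lra|].
  exists (Rmin d1 d2). split. apply Rmin_pos; lra.
  intros w Hw.
  assert (Hw1 : 0 < Cmod w < d1). { split. lra. eapply Rlt_le_trans. apply Hw. apply Rmin_l. }
  assert (Hw2 : 0 < Cmod w < d2). { split. lra. eapply Rlt_le_trans. apply Hw. apply Rmin_r. }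
  specialize (H1 w Hw1). specialize (H2 w Hw2).
  replace (Cminus (Cplus (A w) (B w)) (Cplus a b)) with (Cplus (Cminus (A w) a) (Cminus (B w) b)) by ring.
  eapply Rle_lt_trans. apply Cmod_triangle. lra.
Qed.

Lemma clim_opp (A : C -> C) (a : C) : clim A a -> clim (fun w => Copp (A w)) (Copp a).
Proof.
  intros HA eps He. destruct (HA eps He) as [d [Hd H]]. exists d. split; auto.
  intros w Hw. replace (Cminus (Copp (A w)) (Copp a)) with (Copp (Cminus (A w) a)) by ring.
  rewrite Cmod_opp. auto.
Qed.

Lemma clim_minus (A B : C -> C) (a b : C) : clim A a -> clim B b ->
  clim (fun w => Cminus (A w) (B w)) (Cminus a b).
Proof.
  intros HA HB. apply (clim_plus A (fun w => Copp (B w))); auto. apply clim_opp; auto.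
Qed.

Lemma clim_mult (A B : C -> C) (a b : C) : clim A a -> clim B b ->
  clim (fun w => Cmult (A w) (B w)) (Cmult a b).
Proof.
  intros HA HB eps He.
  set (e1 := Rmin 1 (eps / (2 * (Cmod b + 1)))).
  set (e2 := eps / (2 * (Cmod a + 2))).
  assert (Hb0 := Cmod_ge_0 b). assert (Ha0 := Cmod_ge_0 a).
  assert (He1 : 0 < e1). { apply Rmin_pos. lra. apply Rdiv_lt_0_compat; lra. }
  assert (He2 : 0 < e2). { apply Rdiv_lt_0_compat; lra. }
  destruct (HA e1 He1) as [d1 [Hd1 H1]].
  destruct (HB e2 He2) as [d2 [Hd2 H2]].
  exists (Rmin d1 d2). split. apply Rmin_pos; lra.
  intros w Hw.
  assert (Hw1 : 0 < Cmod w < d1). { split. lra. eapply Rlt_le_trans. apply Hw. apply Rmin_l. }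
  assert (Hw2 : 0 < Cmod w < d2). { split. lra. eapply Rlt_le_trans. apply Hw. apply Rmin_r. }
  specialize (H1 w Hw1). specialize (H2 w Hw2).
  replace (Cminus (Cmult (A w) (B w)) (Cmult a b)) with
    (Cplus (Cmult (Cminus (A w) a) b) (Cmult (A w) (Cminus (B w) b))) by ring.
  eapply Rle_lt_trans. apply Cmod_triangle. rewrite !Cmod_mult.
  assert (HAw : Cmod (A w) <= Cmod a + 1).
  { replace (A w) with (Cplus a (Cminus (A w) a)) by ring.
    eapply Rle_trans. apply Cmod_triangle. assert (e1 <= 1) by apply Rmin_l. lra. }
  assert (T1 : Cmod (Cminus (A w) a) * Cmod b <= eps / 2).
  { assert (e1 <= eps / (2 * (Cmod b + 1))) by apply Rmin_r.
    apply Rle_trans with (e1 * (Cmod b + 1)).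
    apply Rmult_le_compat; try lra. apply Cmod_ge_0.
    apply Rle_trans with (eps / (2 * (Cmod b + 1)) * (Cmod b + 1)).
    apply Rmult_le_compat_r; lra. right. field. lra. }
  assert (T2 : Cmod (A w) * Cmod (Cminus (B w) b) < eps / 2).
  { apply Rle_lt_trans with ((Cmod a + 1) * Cmod (Cminus (B w) b)).
    apply Rmult_le_compat_r. apply Cmod_ge_0. auto.
    apply Rle_lt_trans with ((Cmod a + 2) * Cmod (Cminus (B w) b)).
    apply Rmult_le_compat_r. apply Cmod_ge_0. lra.
    apply Rlt_le_trans with ((Cmod a + 2) * e2).
    apply Rmult_lt_compat_l; lra. right. unfold e2. field. lra. }
  lra.
Qed.

Lemma clim_inv (B : C -> C) (b : C) : b <> RtoC 0 -> clim B b ->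
  clim (fun w => Cinv (B w)) (Cinv b).
Proof.
  intros Hb HB eps He.
  assert (Hbp : 0 < Cmod b) by (apply Cmod_gt_0; auto).
  set (e := Rmin (Cmod b / 2) (eps * (Cmod b * Cmod b) / 2)).
  assert (He' : 0 < e). { apply Rmin_pos. lra. apply Rdiv_lt_0_compat; [|lra]. apply Rmult_lt_0_compat; auto. apply Rmult_lt_0_compat; auto. }
  destruct (HB e He') as [d [Hd H]]. exists d. split; auto.
  intros w Hw. specialize (H w Hw).
  assert (Hle1 : e <= Cmod b / 2) by apply Rmin_l.
  assert (Hle2 : e <= eps * (Cmod b * Cmod b) / 2) by apply Rmin_r.
  assert (HBw : Cmod b / 2 <= Cmod (B w)).
  { assert (Cmod b <= Cmod (B w) + Cmod (Cminus (B w) b)).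
    { rewrite Cmod_minus_sym. replace b with (Cplus (B w) (Cminus b (B w))) at 1 by ring. apply Cmod_triangle. }
    lra. }
  assert (HBw0 : B w <> RtoC 0). { intro E. rewrite E, Cmod_0 in HBw. lra. }
  replace (Cminus (Cinv (B w)) (Cinv b)) with (Cdiv (Cminus b (B w)) (Cmult (B w) b)) by (field; auto).
  rewrite Cmod_div. 2: apply Cmult_neq_0; auto.
  rewrite Cmod_mult, Cmod_minus_sym.
  apply Rmult_lt_reg_r with (Cmod (B w) * Cmod b).
  apply Rmult_lt_0_compat; lra.
  unfold Rdiv. rewrite Rmult_assoc, Rinv_l. 2: apply Rgt_not_eq, Rmult_lt_0_compat; lra.
  rewrite Rmult_1_r.
  apply Rlt_le_trans with e; auto.
  apply Rle_trans with (eps * (Cmod b * Cmod b) / 2); auto.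
  apply Rle_trans with (eps * (Cmod b / 2 * Cmod b)). right; field.
  apply Rmult_le_compat_l. lra. apply Rmult_le_compat_r; lra.
Qed.
Lemma clim_replace (A B : C -> C) (a b : C) : clim A a -> a = b ->
  (forall w, w <> RtoC 0 -> A w = B w) -> clim B b.
Proof.
  intros H E HAB. subst b. eapply (clim_ext _ _ _ 1 Rlt_0_1); [|exact H].
  intros w Hw. apply HAB. intro E. rewrite E, Cmod_0 in Hw. lra.
Qed.

Lemma diff_clim (h : C -> C) (z : C) :
  C_differentiable_at h z -> exists l, clim (fun w => Cdiv (Cminus (h (Cplus z w)) (h z)) w) l.
Proof. intros [l H]. exists l. exact H. Qed.

Lemma clim_diff (h : C -> C) (z l : C) :
  clim (fun w => Cdiv (Cminus (h (Cplus z w)) (h z)) w) l -> C_differentiable_at h z.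
Proof. intros H. exists l. exact H. Qed.

Lemma diff_cont (h : C -> C) (z : C) :
  C_differentiable_at h z -> clim (fun w => h (Cplus z w)) (h z).
Proof.
  intros Hd. destruct (diff_clim h z Hd) as [l Hl].
  assert (H := clim_plus _ _ _ _ (clim_const (h z))
     (clim_mult _ _ _ _ clim_id Hl)).
  cut (clim (fun w => h (Cplus z w)) (Cplus (h z) (Cmult (RtoC 0) l))).
  { intro H'. replace (Cplus (h z) (Cmult (RtoC 0) l)) with (h z) in H' by ring. exact H'. }
  eapply (clim_ext _ _ _ 1 Rlt_0_1); [|exact H].
  intros w Hw. assert (w <> RtoC 0). { intro E. rewrite E, Cmod_0 in Hw. lra. }
  cbv beta. field. auto.
Qed.

Lemma diff_scal (h : C -> C) (z K : C) :
  C_differentiable_at h z -> C_differentiable_at (fun w => Cmult K (h w)) z.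
Proof.
  intros Hd. destruct (diff_clim h z Hd) as [l Hl].
  apply clim_diff with (Cmult K l).
  eapply (clim_ext _ _ _ 1 Rlt_0_1); [| exact (clim_mult _ _ _ _ (clim_const K) Hl)].
  intros w Hw. assert (w <> RtoC 0). { intro E. rewrite E, Cmod_0 in Hw. lra. }
  cbv beta. field. auto.
Qed.

Lemma diff_quot (h : C -> C) (z c0 al la : C) :
  C_differentiable_at h z -> Cplus al (Cmult la z) <> RtoC 0 ->
  C_differentiable_at (fun w => Cdiv (Cminus (h w) c0) (Cplus al (Cmult la w))) z.
Proof.
  intros Hd HD. destruct (diff_clim h z Hd) as [l Hl].
  set (Dz := Cplus al (Cmult la z)) in *.
  assert (HDp : 0 < Cmod Dz) by (apply Cmod_gt_0; auto).
  set (d0 := Cmod Dz / (Cmod la + 1)).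
  assert (Hla := Cmod_ge_0 la).
  assert (Hd0 : 0 < d0) by (apply Rdiv_lt_0_compat; lra).
  assert (Hden : clim (fun w => Cmult (Cplus al (Cmult la (Cplus z w))) Dz) (Cmult Dz Dz)).
  { apply clim_mult; [|apply clim_const].
    apply (clim_replace (fun w => Cplus Dz (Cmult la w)) _ (Cplus Dz (Cmult la (RtoC 0)))).
    apply clim_plus. apply clim_const. apply clim_mult. apply clim_const. apply clim_id.
    ring. intros w _. unfold Dz. ring. }
  assert (HDD : Cmult Dz Dz <> RtoC 0) by (apply Cmult_neq_0; auto).
  assert (Hnum : clim (fun w => Cminus (Cmult (Cdiv (Cminus (h (Cplus z w)) (h z)) w) Dz) (Cmult la (Cminus (h z) c0)))
                       (Cminus (Cmult l Dz) (Cmult la (Cminus (h z) c0)))).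
  { apply clim_minus. apply clim_mult. exact Hl. apply clim_const. apply clim_const. }
  apply clim_diff with (Cmult (Cminus (Cmult l Dz) (Cmult la (Cminus (h z) c0))) (Cinv (Cmult Dz Dz))).
  eapply (clim_ext _ _ _ d0 Hd0); [| exact (clim_mult _ _ _ _ Hnum (clim_inv _ _ HDD Hden))].
  intros w Hw. assert (Hw0 : w <> RtoC 0). { intro E. rewrite E, Cmod_0 in Hw. lra. }
  assert (Hzw : Cplus al (Cmult la (Cplus z w)) <> RtoC 0).
  { replace (Cplus al (Cmult la (Cplus z w))) with (Cplus Dz (Cmult la w)) by (unfold Dz; ring).
    intro E. assert (Cmod Dz <= Cmod (Cmult la w)).
    { replace Dz with (Copp (Cmult la w)) by (rewrite <- (Cplus_0_l (Copp (Cmult la w))), <- E; ring).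
      rewrite Cmod_opp. lra. }
    rewrite Cmod_mult in H.
    assert (Cmod la * Cmod w <= Cmod la * d0) by (apply Rmult_le_compat_l; lra).
    assert (Cmod la * d0 < Cmod Dz).
    { unfold d0. apply Rlt_le_trans with ((Cmod la + 1) * (Cmod Dz / (Cmod la + 1))).
      apply Rmult_lt_compat_r. apply Rdiv_lt_0_compat; lra. lra. right. field. lra. }
    lra. }
  fold Dz in Hzw |- *.
  unfold Dz in *. field. repeat split; auto.
Qed.

Lemma holo_scal (h : C -> C) (K : C) :
  holomorphic_at h (RtoC 0) -> holomorphic_at (fun w => Cmult K (h w)) (RtoC 0).
Proof.
  intros [r [Hr H]]. exists r. split; auto. intros z Hz. apply diff_scal. auto.
Qed.

Lemma holo_quot (h : C -> C) (c0 al la : C) :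
  holomorphic_at h (RtoC 0) -> al <> RtoC 0 ->
  holomorphic_at (fun w => Cdiv (Cminus (h w) c0) (Cplus al (Cmult la w))) (RtoC 0).
Proof.
  intros [r [Hr H]] Hal.
  assert (Hap : 0 < Cmod al) by (apply Cmod_gt_0; auto).
  assert (Hla := Cmod_ge_0 la).
  exists (Rmin r (Cmod al / (Cmod la + 1))). split.
  apply Rmin_pos; auto. apply Rdiv_lt_0_compat; lra.
  intros z Hz. replace (Cminus z (RtoC 0)) with z in Hz by ring.
  apply diff_quot. apply H. replace (Cminus z (RtoC 0)) with z by ring.
  eapply Rlt_le_trans. apply Hz. apply Rmin_l.
  intro E.
  assert (Cmod al <= Cmod (Cmult la z)).
  { replace al with (Copp (Cmult la z)) by (rewrite <- (Cplus_0_l (Copp (Cmult la z))), <- E; ring).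
    rewrite Cmod_opp. lra. }
  rewrite Cmod_mult in H0.
  assert (Cmod z < Cmod al / (Cmod la + 1)). { eapply Rlt_le_trans. apply Hz. apply Rmin_r. }
  assert (Cmod la * Cmod z <= Cmod la * (Cmod al / (Cmod la + 1))) by (apply Rmult_le_compat_l; lra).
  assert (Cmod la * (Cmod al / (Cmod la + 1)) < Cmod al).
  { apply Rlt_le_trans with ((Cmod la + 1) * (Cmod al / (Cmod la + 1))).
    apply Rmult_lt_compat_r. apply Rdiv_lt_0_compat; lra. lra. right. field. lra. }
  lra.
Qed.
Definition Laur (phi : C -> C) (N : nat) (c : nat -> C) : Prop :=
  exists (h : C -> C) (d : R), 0 < d /\ holomorphic_at h (RtoC 0) /\
    forall s, 0 < Cmod s < d -> phi s = Cplus (Csum1 N (fun j => Cdiv (c j) (Cpow s j))) (h s).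

Lemma Csum1_ext (N : nat) (F G : nat -> C) :
  (forall j, (1 <= j <= N)%nat -> F j = G j) -> Csum1 N F = Csum1 N G.
Proof.
  induction N; intros H; simpl. reflexivity.
  rewrite IHN. rewrite H. reflexivity. lia. intros j Hj. apply H. lia.
Qed.

Lemma Csum1_scal (N : nat) (K : C) (F : nat -> C) :
  Cmult K (Csum1 N F) = Csum1 N (fun j => Cmult K (F j)).
Proof.
  induction N; simpl. ring. rewrite <- IHN. ring.
Qed.

Lemma Laur_ext (phi psi : C -> C) (N : nat) (c : nat -> C) (d0 : R) :
  Laur phi N c -> 0 < d0 -> (forall s, 0 < Cmod s < d0 -> phi s = psi s) -> Laur psi N c.
Proof.
  intros [h [d [Hd [Hh H]]]] Hd0 E. exists h, (Rmin d d0). split. apply Rmin_pos; auto.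
  split; auto. intros s Hs. rewrite <- E. apply H.
  split. lra. eapply Rlt_le_trans. apply Hs. apply Rmin_l.
  split. lra. eapply Rlt_le_trans. apply Hs. apply Rmin_r.
Qed.

Lemma Laur_scal (phi : C -> C) (N : nat) (c : nat -> C) (K : C) :
  Laur phi N c -> Laur (fun s => Cmult K (phi s)) N (fun j => Cmult K (c j)).
Proof.
  intros [h [d [Hd [Hh H]]]]. exists (fun s => Cmult K (h s)), d. split; auto.
  split. apply holo_scal; auto.
  intros s Hs. rewrite H; auto. rewrite Cmult_plus_distr_l, Csum1_scal.
  f_equal. apply Csum1_ext. intros j _. unfold Cdiv. ring.
Qed.

Lemma tele (al la s : C) (d : nat -> C) (N : nat) : s <> RtoC 0 ->
  Cmult (Cplus al (Cmult la s)) (Csum1 N (fun j => Cdiv (d j) (Cpow s j))) =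
  Cplus (Csum1 N (fun j => Cdiv (Cplus (Cmult al (d j)) (Cmult la (d (S j)))) (Cpow s j)))
        (Cminus (Cmult la (d 1%nat)) (Cdiv (Cmult la (d (S N))) (Cpow s N))).
Proof.
  intros Hs. induction N.
  - simpl. field.
  - simpl Csum1. rewrite Cmult_plus_distr_l, IHN.
    assert (HN := Cpow_nz s N Hs).
    rewrite Cpow_S. field. split; auto.
Qed.

Fixpoint Dseq (c : nat -> C) (al la : C) (N m : nat) : C :=
  match m with
  | O => RtoC 0
  | S m' => Cdiv (Cminus (c (N - m')%nat) (Cmult la (Dseq c al la N m'))) al
  end.

Definition cdiv (c : nat -> C) (al la : C) (N : nat) (j : nat) : C :=
  Dseq c al la N (N + 1 - j).

Lemma cdiv_rec (c : nat -> C) (al la : C) (N j : nat) : al <> RtoC 0 -> (1 <= j <= N)%nat ->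
  c j = Cplus (Cmult al (cdiv c al la N j)) (Cmult la (cdiv c al la N (S j))).
Proof.
  intros Hal Hj. unfold cdiv.
  replace (N + 1 - j)%nat with (S (N + 1 - S j)) by lia. simpl Dseq.
  replace (N - (N + 1 - S j))%nat with j by lia. field. auto.
Qed.

Lemma cdiv_end (c : nat -> C) (al la : C) (N : nat) : cdiv c al la N (S N) = RtoC 0.
Proof. unfold cdiv. replace (N + 1 - S N)%nat with O by lia. reflexivity. Qed.

Lemma Laur_div (phi : C -> C) (N : nat) (c : nat -> C) (al la : C) :
  Laur phi N c -> al <> RtoC 0 ->
  Laur (fun s => Cdiv (phi s) (Cplus al (Cmult la s))) N (cdiv c al la N).
Proof.
  intros [h [d [Hd [Hh H]]]] Hal.
  set (c' := cdiv c al la N).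
  exists (fun s => Cdiv (Cminus (h s) (Cmult la (c' 1%nat))) (Cplus al (Cmult la s))).
  assert (Hap : 0 < Cmod al) by (apply Cmod_gt_0; auto).
  assert (Hla := Cmod_ge_0 la).
  exists (Rmin d (Cmod al / (Cmod la + 1))). split.
  apply Rmin_pos; auto. apply Rdiv_lt_0_compat; lra.
  split. apply holo_quot; auto.
  intros s Hs.
  assert (Hs1 : 0 < Cmod s < d). { split. lra. eapply Rlt_le_trans. apply Hs. apply Rmin_l. }
  assert (Hs0 : s <> RtoC 0). { intro E. rewrite E, Cmod_0 in Hs. lra. }
  assert (HD : Cplus al (Cmult la s) <> RtoC 0).
  { intro E.
    assert (Cmod al <= Cmod (Cmult la s)).
    { replace al with (Copp (Cmult la s)) by (rewrite <- (Cplus_0_l (Copp (Cmult la s))), <- E; ring).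
      rewrite Cmod_opp. lra. }
    rewrite Cmod_mult in H0.
    assert (Cmod s < Cmod al / (Cmod la + 1)). { eapply Rlt_le_trans. apply Hs. apply Rmin_r. }
    assert (Cmod la * Cmod s <= Cmod la * (Cmod al / (Cmod la + 1))) by (apply Rmult_le_compat_l; lra).
    assert (Cmod la * (Cmod al / (Cmod la + 1)) < Cmod al).
    { apply Rlt_le_trans with ((Cmod la + 1) * (Cmod al / (Cmod la + 1))).
      apply Rmult_lt_compat_r. apply Rdiv_lt_0_compat; lra. lra. right. field. lra. }
    lra. }
  rewrite H; auto.
  assert (E1 : Csum1 N (fun j => Cdiv (c j) (Cpow s j)) =
     Csum1 N (fun j => Cdiv (Cplus (Cmult al (c' j)) (Cmult la (c' (S j)))) (Cpow s j))).
  { apply Csum1_ext. intros j Hj. unfold c'. rewrite <- cdiv_rec; auto. }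
  rewrite E1.
  assert (E2 := tele al la s c' N Hs0).
  assert (E3 : c' (S N) = RtoC 0) by apply cdiv_end.
  rewrite E3 in E2.
  set (S1 := Csum1 N (fun j => Cdiv (Cplus (Cmult al (c' j)) (Cmult la (c' (S j)))) (Cpow s j))) in *.
  set (S2 := Csum1 N (fun j => Cdiv (c' j) (Cpow s j))) in *.
  assert (HN := Cpow_nz s N Hs0).
  assert (E4 : S1 = Cminus (Cmult (Cplus al (Cmult la s)) S2) (Cmult la (c' 1%nat))).
  { rewrite E2. field. auto. }
  rewrite E4. field. auto.
Qed.

Lemma cdiv_bound (c : nat -> C) (al : C) (lr M : R) (N : nat) :
  al <> RtoC 0 -> 0 <= lr < Cmod al -> 0 <= M ->
  (forall j, (1 <= j <= N)%nat -> Cmod (c j) <= M) ->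
  forall j, (1 <= j <= N)%nat -> Cmod (cdiv c al (RtoC lr) N j) <= M / (Cmod al - lr).
Proof.
  intros Hal Hlr HM Hc.
  assert (HD : forall m, (m <= N)%nat -> Cmod (Dseq c al (RtoC lr) N m) <= M / (Cmod al - lr)).
  { induction m; intros Hm; simpl Dseq.
    - rewrite Cmod_0. apply Rdiv_le_0_compat; lra.
    - rewrite Cmod_div; auto.
      assert (IH := IHm ltac:(lia)).
      assert (Hcm := Hc (N - m)%nat ltac:(lia)).
      apply Rmult_le_reg_r with (Cmod al). lra.
      unfold Rdiv at 1. rewrite Rmult_assoc, Rinv_l, Rmult_1_r by lra.
      eapply Rle_trans. unfold Cminus. apply Cmod_triangle.
      rewrite Cmod_opp, Cmod_mult, Cmod_R, Rabs_pos_eq by lra.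
      apply Rle_trans with (M + lr * (M / (Cmod al - lr))).
      apply Rplus_le_compat; auto. apply Rmult_le_compat_l; lra.
      right. field. lra. }
  intros j Hj. unfold cdiv. apply HD. lia.
Qed.
Definition LaurB (phi : C -> C) (N : nat) (M : R) : Prop :=
  exists c, Laur phi N c /\ forall j, (1 <= j <= N)%nat -> Cmod (c j) <= M.

Lemma LaurB_ext (phi psi : C -> C) (N : nat) (M M' : R) :
  LaurB phi N M -> (forall s, phi s = psi s) -> M = M' -> LaurB psi N M'.
Proof.
  intros [c [Hc Hb]] E EM. subst M'. exists c. split; auto.
  eapply Laur_ext. exact Hc. apply Rlt_0_1. intros s _. apply E.
Qed.

Lemma LaurB_div (phi : C -> C) (N : nat) (M : R) (al : C) (lr : R) :
  LaurB phi N M -> 0 <= M -> 0 <= lr < Cmod al ->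
  LaurB (fun s => Cmult (phi s) (Cinv (Cplus al (Cmult (RtoC lr) s)))) N (M / (Cmod al - lr)).
Proof.
  intros [c [Hc Hb]] HM Hlr.
  assert (Hal : al <> RtoC 0). { intro E. rewrite E, Cmod_0 in Hlr. lra. }
  exists (cdiv c al (RtoC lr) N). split.
  apply (Laur_div _ _ _ _ _ Hc Hal).
  apply cdiv_bound; auto.
Qed.

Lemma Rprod1_ge0 (L : nat) (F : nat -> R) : (forall m, (1 <= m <= L)%nat -> 0 <= F m) -> 0 <= Rprod1 L F.
Proof.
  induction L; intros H; simpl. lra. apply Rmult_le_pos. apply IHL. intros m Hm. apply H; lia. apply H; lia.
Qed.

Lemma LaurB_chain1 (phi : C -> C) (N : nat) (M lr : R) (L : nat) (al : nat -> C) :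
  LaurB phi N M -> 0 <= M -> (forall m, (1 <= m <= L)%nat -> 0 <= lr < Cmod (al m)) ->
  LaurB (fun s => Cmult (phi s) (Cprod1 L (fun m => Cinv (Cplus (al m) (Cmult (RtoC lr) s))))) N
        (M * Rprod1 L (fun m => / (Cmod (al m) - lr))).
Proof.
  intros HB HM. induction L; intros Hal.
  - simpl. eapply LaurB_ext. exact HB. intros s. ring. ring.
  - assert (IH := IHL ltac:(intros m Hm; apply Hal; lia)).
    assert (HM' : 0 <= M * Rprod1 L (fun m => / (Cmod (al m) - lr))).
    { apply Rmult_le_pos; auto. apply Rprod1_ge0. intros m Hm.
      assert (H := Hal m ltac:(lia)). left. apply Rinv_0_lt_compat. lra. }
    assert (H := LaurB_div _ _ _ (al (S L)) lr IH HM' (Hal (S L) ltac:(lia))).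
    eapply LaurB_ext. exact H. intros s. simpl. ring.
    simpl. unfold Rdiv. ring.
Qed.

Lemma LaurB_chain2 (phi : C -> C) (N : nat) (M lr : R) (L F : nat) (al : nat -> nat -> C) :
  LaurB phi N M -> 0 <= M ->
  (forall j m, (1 <= j <= F)%nat -> (1 <= m <= L)%nat -> 0 <= lr < Cmod (al j m)) ->
  LaurB (fun s => Cmult (phi s) (Cprod1 F (fun j => Cprod1 L (fun m => Cinv (Cplus (al j m) (Cmult (RtoC lr) s)))))) N
        (M * Rprod1 F (fun j => Rprod1 L (fun m => / (Cmod (al j m) - lr)))).
Proof.
  intros HB HM. induction F; intros Hal.
  - simpl. eapply LaurB_ext. exact HB. intros s. ring. ring.
  - assert (IH := IHF ltac:(intros j m Hj Hm; apply Hal; lia)).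
    assert (HM' : 0 <= M * Rprod1 F (fun j => Rprod1 L (fun m => / (Cmod (al j m) - lr)))).
    { apply Rmult_le_pos; auto. apply Rprod1_ge0. intros j Hj. apply Rprod1_ge0. intros m Hm.
      assert (H := Hal j m ltac:(lia) Hm). left. apply Rinv_0_lt_compat. lra. }
    assert (H := LaurB_chain1 _ _ _ lr L (al (S F)) IH HM' (fun m Hm => Hal (S F) m ltac:(lia) Hm)).
    eapply LaurB_ext. exact H. intros s. simpl. ring.
    simpl. ring.
Qed.
Definition slim (u : nat -> C) (l : C) : Prop :=
  forall eps : R, 0 < eps -> exists N : nat, forall n, (N <= n)%nat -> Cmod (Cminus (u n) l) < eps.

Lemma ball_C (x y : C) (e : R) : @ball C_UniformSpace x e y <-> (Rabs (fst y - fst x) < e /\ Rabs (snd y - snd x) < e).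
Proof.
  destruct x, y. simpl. unfold ball. simpl. unfold prod_ball. simpl. unfold ball; simpl.
  unfold AbsRing_ball. simpl. unfold abs, minus, plus, opp; simpl. tauto.
Qed.

Lemma Cmod_le_sum (x : C) : Cmod x <= Rabs (fst x) + Rabs (snd x).
Proof.
  destruct x as [a b]. unfold Cmod. simpl.
  rewrite <- (sqrt_Rsqr (Rabs a + Rabs b)).
  apply sqrt_le_1_alt. unfold Rsqr.
  assert (0 <= Rabs a) by apply Rabs_pos. assert (0 <= Rabs b) by apply Rabs_pos.
  assert (a * a = Rabs a * Rabs a) by (rewrite <- Rabs_mult; rewrite Rabs_pos_eq; nra).
  assert (b * b = Rabs b * Rabs b) by (rewrite <- Rabs_mult; rewrite Rabs_pos_eq; nra).
  nra. apply Rplus_le_le_0_compat; apply Rabs_pos.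
Qed.

Lemma fst_Cminus (a b : C) : fst (Cminus a b) = fst a - fst b.
Proof. reflexivity. Qed.
Lemma snd_Cminus (a b : C) : snd (Cminus a b) = snd a - snd b.
Proof. reflexivity. Qed.

Lemma slim_filterlim (u : nat -> C) (l : C) : slim u l -> filterlim u eventually (locally l).
Proof.
  intros H. apply filterlim_locally. intros [e He]. simpl.
  destruct (H e He) as [N HN]. exists N. intros n Hn. apply ball_C.
  specialize (HN n Hn).
  assert (H1 := Rmax_Cmod (Cminus (u n) l)).
  assert (H0 : Rabs (fst (Cminus (u n) l)) <= Rmax (Rabs (fst (Cminus (u n) l))) (Rabs (snd (Cminus (u n) l)))) by apply Rmax_l.
  assert (H2 : Rabs (snd (Cminus (u n) l)) <= Rmax (Rabs (fst (Cminus (u n) l))) (Rabs (snd (Cminus (u n) l)))) by apply Rmax_r.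
  rewrite fst_Cminus in *. rewrite snd_Cminus in *.
  set (X := Rabs (fst (u n) - fst l)) in *. set (Y := Rabs (snd (u n) - snd l)) in *.
  set (Z := Rmax X Y) in *. set (W := Cmod (Cminus (u n) l)) in *.
  clear H; split; lra.
Qed.

Lemma filterlim_slim (u : nat -> C) (l : C) : filterlim u eventually (locally l) -> slim u l.
Proof.
  intros H eps He. assert (He2 : 0 < eps / 2) by (clear H; lra). apply filterlim_locally with (eps := mkposreal (eps/2) He2) in H.
  destruct H as [N HN]. exists N. intros n Hn. specialize (HN n Hn). destruct (proj1 (ball_C _ _ _) HN) as [Ha Hb].
  eapply Rle_lt_trans. apply Cmod_le_sum. rewrite fst_Cminus, snd_Cminus.
  simpl in Ha, Hb.
  set (X := Rabs (fst (u n) - fst l)) in *. set (Y := Rabs (snd (u n) - snd l)) in *. clear -Ha Hb; lra.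
Qed.

Lemma slim_unique (u : nat -> C) (a b : C) : slim u a -> slim u b -> a = b.
Proof.
  intros Ha Hb. apply Ceq_minus. apply Cmod_eq_0.
  destruct (Req_dec (Cmod (Cminus a b)) 0) as [E|E]; auto. exfalso.
  assert (P : 0 < Cmod (Cminus a b)) by (assert (X := Cmod_ge_0 (Cminus a b)); lra).
  destruct (Ha _ (ltac:(lra) : 0 < Cmod (Cminus a b) / 2)) as [N1 H1].
  destruct (Hb _ (ltac:(lra) : 0 < Cmod (Cminus a b) / 2)) as [N2 H2].
  specialize (H1 (N1 + N2)%nat ltac:(lia)). specialize (H2 (N1 + N2)%nat ltac:(lia)).
  assert (X := Cmod_tri_minus a (u (N1 + N2)%nat) b). rewrite (Cmod_minus_sym a (u _)) in X. lra.
Qed.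

Lemma slim_ext (u v : nat -> C) (l : C) (N0 : nat) :
  (forall n, (N0 <= n)%nat -> u n = v n) -> slim u l -> slim v l.
Proof.
  intros E H eps He. destruct (H eps He) as [N HN]. exists (N + N0)%nat. intros n Hn.
  rewrite <- E by lia. apply HN. lia.
Qed.

Lemma slim_const (a : C) : slim (fun _ => a) a.
Proof.
  intros eps He. exists O. intros n _. replace (Cminus a a) with (RtoC 0) by ring. rewrite Cmod_0. lra.
Qed.

Lemma slim_mult (A B : nat -> C) (a b : C) : slim A a -> slim B b ->
  slim (fun w => Cmult (A w) (B w)) (Cmult a b).
Proof.
  intros HA HB eps He.
  set (e1 := Rmin 1 (eps / (2 * (Cmod b + 1)))).
  set (e2 := eps / (2 * (Cmod a + 2))).
  assert (Hb0 := Cmod_ge_0 b). assert (Ha0 := Cmod_ge_0 a).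
  assert (He1 : 0 < e1). { apply Rmin_pos. lra. apply Rdiv_lt_0_compat; lra. }
  assert (He2 : 0 < e2). { apply Rdiv_lt_0_compat; lra. }
  destruct (HA e1 He1) as [d1 H1].
  destruct (HB e2 He2) as [d2 H2].
  exists (d1 + d2)%nat.
  intros w Hw.
  specialize (H1 w ltac:(lia)). specialize (H2 w ltac:(lia)).
  replace (Cminus (Cmult (A w) (B w)) (Cmult a b)) with
    (Cplus (Cmult (Cminus (A w) a) b) (Cmult (A w) (Cminus (B w) b))) by ring.
  eapply Rle_lt_trans. apply Cmod_triangle. rewrite !Cmod_mult.
  assert (HAw : Cmod (A w) <= Cmod a + 1).
  { replace (A w) with (Cplus a (Cminus (A w) a)) by ring.
    eapply Rle_trans. apply Cmod_triangle. assert (e1 <= 1) by apply Rmin_l. lra. }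
  assert (T1 : Cmod (Cminus (A w) a) * Cmod b <= eps / 2).
  { assert (e1 <= eps / (2 * (Cmod b + 1))) by apply Rmin_r.
    apply Rle_trans with (e1 * (Cmod b + 1)).
    apply Rmult_le_compat; try lra. apply Cmod_ge_0.
    apply Rle_trans with (eps / (2 * (Cmod b + 1)) * (Cmod b + 1)).
    apply Rmult_le_compat_r; lra. right. field. lra. }
  assert (T2 : Cmod (A w) * Cmod (Cminus (B w) b) < eps / 2).
  { apply Rle_lt_trans with ((Cmod a + 1) * Cmod (Cminus (B w) b)).
    apply Rmult_le_compat_r. apply Cmod_ge_0. auto.
    apply Rle_lt_trans with ((Cmod a + 2) * Cmod (Cminus (B w) b)).
    apply Rmult_le_compat_r. apply Cmod_ge_0. lra.
    apply Rlt_le_trans with ((Cmod a + 2) * e2).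
    apply Rmult_lt_compat_l; lra. right. unfold e2. field. lra. }
  lra.
Qed.
Lemma Rabs_le_inv (x y : R) : Rabs x <= y -> -y <= x <= y.
Proof. unfold Rabs. destruct (Rcase_abs x); intros; lra. Qed.

Lemma exp_bnd (a : R) : Rabs a <= 1/2 -> Rabs (exp a - 1 - a) <= 2 * a^2 /\ exp a <= 2.
Proof.
  intros Ha. assert (H1 := exp_ineq1_le a). assert (H2 := exp_ineq1_le (-a)).
  assert (Hb : -1/2 <= a <= 1/2) by (apply Rabs_le_inv in Ha; lra).
  assert (E : exp a * exp (-a) = 1) by (rewrite <- exp_plus; replace (a + - a) with 0 by ring; apply exp_0).
  assert (Hp := exp_pos a). assert (Hp' := exp_pos (-a)).
  assert (U : exp a * (1 - a) <= 1) by nra.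
  assert (U2 : exp a <= / (1 - a)).
  { apply Rmult_le_reg_r with (1 - a). lra. rewrite Rinv_l by lra. lra. }
  assert (U3 : / (1 - a) - 1 - a = a^2 / (1 - a)) by (field; lra).
  assert (U4 : a^2 / (1 - a) <= 2 * a^2).
  { unfold Rdiv. apply Rmult_le_reg_r with (1 - a). lra. rewrite Rmult_assoc, Rinv_l by lra. nra. }
  split.
  - apply Rabs_le. split; nra.
  - assert (/ (1 - a) <= 2). { apply Rmult_le_reg_r with (1 - a). lra. rewrite Rinv_l by lra. lra. } lra.
Qed.

Lemma cos_bnd (b : R) : Rabs b <= 1/2 -> Rabs (cos b - 1) <= b^2 / 2.
Proof.
  intros Hb. assert (Hb' : -1/2 <= b <= 1/2) by (apply Rabs_le_inv in Hb; lra).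
  destruct (pre_cos_bound b 0 ltac:(lra) ltac:(lra)) as [H1 _].
  assert (E : cos_approx b (2 * 0 + 1) = 1 - b^2/2) by (unfold cos_approx, cos_term; simpl; field).
  rewrite E in H1. assert (H2 := COS_bound b).
  apply Rabs_le. split; nra.
Qed.

Lemma sin_bnd_pos (b : R) : 0 <= b <= 1/2 -> Rabs (sin b - b) <= b^2.
Proof.
  intros Hb. destruct (pre_sin_bound b 0 ltac:(lra) ltac:(lra)) as [H1 H2].
  assert (E1 : sin_approx b (2 * 0 + 1) = b - b^3/6) by (unfold sin_approx, sin_term; simpl; field).
  assert (E2 : sin_approx b (2 * (0 + 1)) = b - b^3/6 + b^5/120) by (unfold sin_approx, sin_term; simpl; field).
  rewrite E1 in H1. rewrite E2 in H2.
  assert (0 <= b^3) by (apply pow_le; lra).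
  assert (b^3 <= b^2 / 2) by nra.
  assert (b^5 <= b^3) by nra.
  apply Rabs_le. split; nra.
Qed.

Lemma sin_bnd (b : R) : Rabs b <= 1/2 -> Rabs (sin b - b) <= b^2.
Proof.
  intros Hb. assert (Hb' : -1/2 <= b <= 1/2) by (apply Rabs_le_inv in Hb; lra).
  destruct (Rle_dec 0 b) as [P|P].
  - apply sin_bnd_pos. lra.
  - assert (H := sin_bnd_pos (-b) ltac:(lra)). rewrite sin_neg in H.
    replace (- sin b - - b) with (- (sin b - b)) in H by ring. rewrite Rabs_Ropp in H.
    replace ((-b)^2) with (b^2) in H by ring. exact H.
Qed.

Lemma Cexp_bnd (w : C) : Cmod w <= 1/2 ->
  Cmod (Cminus (Cminus (Cexp w) (RtoC 1)) w) <= 8 * (Cmod w)^2.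
Proof.
  intros Hw. destruct w as [a b].
  assert (Hm := Rmax_Cmod (a, b)). simpl fst in Hm. simpl snd in Hm.
  assert (Ha : Rabs a <= Cmod (a, b)). { eapply Rle_trans. apply Rmax_l. exact Hm. }
  assert (Hb : Rabs b <= Cmod (a, b)). { eapply Rle_trans. apply Rmax_r. exact Hm. }
  set (c := Cmod (a, b)) in *.
  eapply Rle_trans. apply Cmod_le_sum.
  change (fst (Cminus (Cminus (Cexp (a, b)) (RtoC 1)) (a, b))) with (exp a * cos b - 1 - a).
  change (snd (Cminus (Cminus (Cexp (a, b)) (RtoC 1)) (a, b))) with (exp a * sin b - 0 - b).
  assert (Ha2 : Rabs a <= 1/2) by lra. assert (Hb2 : Rabs b <= 1/2) by lra.
  destruct (exp_bnd a Ha2) as [E1 E2].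
  assert (C1 := cos_bnd b Hb2). assert (S1 := sin_bnd b Hb2).
  assert (Hep := exp_pos a).
  assert (Sa : a^2 <= c^2). { rewrite <- (pow2_abs a). apply pow_incr. split; [apply Rabs_pos| auto]. }
  assert (Sb : b^2 <= c^2). { rewrite <- (pow2_abs b). apply pow_incr. split; [apply Rabs_pos| auto]. }
  assert (F1 : Rabs (exp a * cos b - 1 - a) <= 3 * c^2).
  { replace (exp a * cos b - 1 - a) with ((exp a - 1 - a) + exp a * (cos b - 1)) by ring.
    eapply Rle_trans. apply Rabs_triang. rewrite Rabs_mult, (Rabs_pos_eq (exp a)) by lra.
    assert (exp a * Rabs (cos b - 1) <= 2 * (b^2/2)).
    { apply Rmult_le_compat; try lra. apply Rabs_pos. }
    lra. }
  assert (F2 : Rabs (exp a * sin b - 0 - b) <= 5 * c^2).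
  { replace (exp a * sin b - 0 - b) with ((exp a - 1) * sin b + (sin b - b)) by ring.
    eapply Rle_trans. apply Rabs_triang. rewrite Rabs_mult.
    assert (G1 : Rabs (exp a - 1) <= 2 * Rabs a).
    { replace (exp a - 1) with ((exp a - 1 - a) + a) by ring. eapply Rle_trans. apply Rabs_triang.
      assert (a^2 <= Rabs a * (1/2)). { rewrite <- (pow2_abs a). assert (0 <= Rabs a) by apply Rabs_pos. nra. }
      lra. }
    assert (G2 : Rabs (sin b) <= 2 * Rabs b).
    { replace (sin b) with ((sin b - b) + b) by ring. eapply Rle_trans. apply Rabs_triang.
      assert (b^2 <= Rabs b * (1/2)). { rewrite <- (pow2_abs b). assert (0 <= Rabs b) by apply Rabs_pos. nra. }
      assert (0 <= Rabs b) by apply Rabs_pos. lra. }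
    assert (Rabs (exp a - 1) * Rabs (sin b) <= (2 * Rabs a) * (2 * Rabs b)).
    { apply Rmult_le_compat; try apply Rabs_pos; auto. }
    assert (Rabs a * Rabs b <= c^2). { assert (0 <= Rabs a) by apply Rabs_pos. assert (0 <= Rabs b) by apply Rabs_pos. nra. }
    lra. }
  lra.
Qed.
Definition nonint (z : C) : Prop := forall k : Z, z <> RtoC (IZR k).

Lemma Cexp_plus (x y : C) : Cexp (Cplus x y) = Cmult (Cexp x) (Cexp y).
Proof.
  destruct x as [a b], y as [c d]. unfold Cexp, Cmult, Cplus. simpl.
  rewrite exp_plus, cos_plus, sin_plus. f_equal; ring.
Qed.

Lemma Cexp_R (r : R) : Cexp (RtoC r) = RtoC (exp r).
Proof.
  unfold Cexp, RtoC. simpl. rewrite cos_0, sin_0. f_equal; ring.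
Qed.

Lemma Cmod_Cexp (w : C) : Cmod (Cexp w) = exp (Re w).
Proof.
  destruct w as [a b]. unfold Cexp, Cmod. simpl.
  replace ((exp a * cos b) * ((exp a * cos b) * 1) + (exp a * sin b) * ((exp a * sin b) * 1))
    with ((exp a) * (exp a) * ((sin b)^2 + (cos b)^2)) by ring.
  rewrite <- !Rsqr_pow2, sin2_cos2, Rmult_1_r. apply sqrt_square. left; apply exp_pos.
Qed.

Lemma Cexp_nz (w : C) : Cexp w <> RtoC 0.
Proof.
  intro E. assert (H := Cmod_Cexp w). rewrite E, Cmod_0 in H. assert (X := exp_pos (Re w)). lra.
Qed.

Definition Pz (n : nat) (z : C) : C := Cprod1 n (fun k => Cplus z (RtoC (INR (k - 1)))).

Lemma Pz_S (n : nat) (z : C) : Pz (S n) z = Cmult (Pz n z) (Cplus z (RtoC (INR n))).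
Proof. unfold Pz. simpl Cprod1. replace (n - 0)%nat with n by lia. reflexivity. Qed.

Lemma nonint_add (z : C) (n : nat) : nonint z -> Cplus z (RtoC (INR n)) <> RtoC 0.
Proof.
  intros H E. apply (H (- Z.of_nat n)%Z). rewrite opp_IZR, <- INR_IZR_INZ.
  replace z with (Cminus (Cplus z (RtoC (INR n))) (RtoC (INR n))) by ring. rewrite E, RtoC_opp. ring.
Qed.

Lemma Pz_nz (n : nat) (z : C) : nonint z -> Pz n z <> RtoC 0.
Proof.
  intros H. induction n.
  - unfold Pz. simpl. apply C1_nz.
  - rewrite Pz_S. apply Cmult_neq_0; auto. apply nonint_add; auto.
Qed.

Lemma nonint_m1 (z : C) : nonint z -> nonint (Cminus z (RtoC 1)).
Proof.
  intros H k E. apply (H (k + 1)%Z). rewrite plus_IZR.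
  replace z with (Cplus (Cminus z (RtoC 1)) (RtoC 1)) by ring.
  rewrite E. rewrite RtoC_plus. reflexivity.
Qed.

Lemma nonint_ne1 (z : C) : nonint z -> Cminus z (RtoC 1) <> RtoC 0.
Proof.
  intros H E. apply (H 1%Z). simpl. replace z with (Cplus (Cminus z (RtoC 1)) (RtoC 1)) by ring. rewrite E. ring.
Qed.

Lemma Pz_shift (n : nat) (z : C) :
  Cmult (Pz n (Cminus z (RtoC 1))) (Cplus (Cminus z (RtoC 1)) (RtoC (INR n))) = Cmult (Cminus z (RtoC 1)) (Pz n z).
Proof.
  induction n.
  - unfold Pz. simpl. ring.
  - rewrite Pz_S, Pz_S.
    transitivity (Cmult (Cmult (Pz n (Cminus z (RtoC 1))) (Cplus (Cminus z (RtoC 1)) (RtoC (INR n)))) (Cplus (Cminus z (RtoC 1)) (RtoC (INR (S n))))).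
    ring.
    rewrite IHn. rewrite S_INR, RtoC_plus. ring.
Qed.

Lemma Gamma_seq_eq (z : C) (n : nat) : Gamma_seq z n =
  Cdiv (Cmult (Cexp (Cmult z (RtoC (ln (INR n))))) (RtoC (INR (fact n)))) (Cmult (Pz n z) (Cplus z (RtoC (INR n)))).
Proof. reflexivity. Qed.

Definition rho_n (z : C) (n : nat) : C :=
  Cdiv (Cmult (Cexp (Cmult z (RtoC (ln (INR (S n) / INR n))))) (RtoC (INR (S n)))) (Cplus z (RtoC (INR (S n)))).

Lemma Gamma_seq_S (z : C) (n : nat) : nonint z -> (1 <= n)%nat ->
  Gamma_seq z (S n) = Cmult (Gamma_seq z n) (rho_n z n).
Proof.
  intros Hz Hn. rewrite !Gamma_seq_eq. unfold rho_n.
  assert (Hx : 0 < INR n) by (apply lt_0_INR; lia).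
  assert (Hx1 : 0 < INR (S n)) by (apply lt_0_INR; lia).
  assert (El : ln (INR (S n)) = ln (INR n) + ln (INR (S n) / INR n)).
  { rewrite <- ln_mult; auto. f_equal. field. lra. apply Rdiv_lt_0_compat; auto. }
  rewrite El, RtoC_plus, Cmult_plus_distr_l, Cexp_plus.
  replace (fact (S n)) with (S n * fact n)%nat by reflexivity.
  rewrite mult_INR, RtoC_mult. rewrite Pz_S.
  assert (H1 := Pz_nz n z Hz). assert (H2 := nonint_add z n Hz). assert (H3 := nonint_add z (S n) Hz).
  field. auto.
Qed.

Lemma Gamma_seq_shift (z : C) (n : nat) : nonint z -> (1 <= n)%nat ->
  Gamma_seq (Cminus z (RtoC 1)) n =
  Cmult (Gamma_seq z n) (Cdiv (Cplus z (RtoC (INR n))) (Cmult (RtoC (INR n)) (Cminus z (RtoC 1)))).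
Proof.
  intros Hz Hn. rewrite !Gamma_seq_eq.
  assert (Hx : 0 < INR n) by (apply lt_0_INR; lia).
  assert (E1 : Cmult (Cminus z (RtoC 1)) (RtoC (ln (INR n))) = Cplus (Cmult z (RtoC (ln (INR n)))) (RtoC (- ln (INR n)))).
  { rewrite RtoC_opp. ring. }
  rewrite E1, Cexp_plus, Cexp_R, exp_Ropp, exp_ln by auto.
  assert (E2 := Pz_shift n z).
  assert (H1 := Pz_nz n z Hz). assert (H2 := nonint_add z n Hz).
  assert (H4 := Pz_nz n _ (nonint_m1 z Hz)). assert (H5 := nonint_add _ n (nonint_m1 z Hz)).
  assert (H6 := nonint_ne1 z Hz).
  assert (Hn0 : RtoC (INR n) <> RtoC 0). { intro E. apply RtoC_inj in E. lra. }
  rewrite RtoC_inv by lra.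
  assert (E3 : Cmult (Pz n (Cminus z (RtoC 1))) (Cplus (Cminus z (RtoC 1)) (RtoC (INR n))) =
               Cmult (Cminus z (RtoC 1)) (Pz n z)) by exact E2.
  rewrite E3. field. repeat split; auto.
Qed.
Lemma nat_big (r : R) : exists n : nat, r < INR n.
Proof.
  destruct (archimed (Rabs r)) as [H _].
  assert (H0 : (0 < up (Rabs r))%Z). { apply lt_IZR. assert (X := Rabs_pos r). simpl. lra. }
  exists (Z.to_nat (up (Rabs r))). rewrite INR_IZR_INZ, Z2Nat.id by lia.
  assert (X := Rle_abs r). lra.
Qed.

Lemma ln_le_m1 (y : R) : 0 < y -> ln y <= y - 1.
Proof. intros Hy. assert (H := exp_ineq1_le (ln y)). rewrite exp_ln in H; lra. Qed.

Lemma ln_bounds (x : R) : 0 < x -> 1 / (x + 1) <= ln ((x + 1) / x) <= 1 / x.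
Proof.
  intros Hx. split.
  - assert (E : (x + 1) / x = / (x / (x + 1))) by (field; lra).
    rewrite E, ln_Rinv by (apply Rdiv_lt_0_compat; lra).
    assert (H := ln_le_m1 (x / (x + 1)) ltac:(apply Rdiv_lt_0_compat; lra)).
    assert (x / (x + 1) - 1 = - (1 / (x + 1))) by (field; lra). lra.
  - assert (H := ln_le_m1 ((x + 1) / x) ltac:(apply Rdiv_lt_0_compat; lra)).
    assert ((x + 1) / x - 1 = 1 / x) by (field; lra). lra.
Qed.

Lemma ratio_bound (z : C) : nonint z -> exists (N0 : nat) (K : R), (1 <= N0)%nat /\ 0 <= K /\
  forall n, (N0 <= n)%nat -> Cmod (Cminus (rho_n z n) (RtoC 1)) <= K / (INR n * INR (S n)).
Proof.
  intros Hz.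
  set (a := Cmod z). assert (Ha : 0 <= a) by apply Cmod_ge_0.
  destruct (nat_big (2 * a + 1)) as [N1 HN1].
  exists (S N1), (2 * (16 * a^2 + a)). split. lia. split. nra.
  intros n Hn.
  assert (Hxn : INR N1 <= INR n) by (apply le_INR; lia).
  set (x := INR n) in *.
  assert (Hx : 2 * a + 1 <= x) by lra. assert (Hx1 : 1 <= x) by lra.
  rewrite S_INR. fold x.
  set (L := ln ((x + 1) / x)).
  destruct (ln_bounds x ltac:(lra)) as [HL1 HL2]. fold L in HL1, HL2.
  set (w := Cmult z (RtoC L)).
  set (E := Cminus (Cminus (Cexp w) (RtoC 1)) w).
  assert (Hden : Cplus z (RtoC (x + 1)) <> RtoC 0).
  { unfold x. rewrite <- S_INR. apply nonint_add; auto. }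
  assert (Eq : Cminus (rho_n z n) (RtoC 1) =
     Cdiv (Cplus (Cmult (RtoC (x + 1)) E) (Cmult z (RtoC ((x + 1) * L - 1)))) (Cplus z (RtoC (x + 1)))).
  { unfold rho_n. rewrite S_INR. fold x. fold L. fold w. unfold E.
    rewrite RtoC_minus, RtoC_mult, RtoC_plus. unfold w. rewrite RtoC_plus in Hden. field. auto. }
  rewrite Eq. rewrite Cmod_div by auto.
  assert (HL0 : 0 <= L). { assert (0 < 1 / (x + 1)) by (apply Rdiv_lt_0_compat; lra). lra. }
  assert (HLx : L * x <= 1). { assert (1 / x * x = 1) by (field; lra). nra. }
  assert (HLx2 : 1 <= L * (x + 1)). { assert (1 / (x + 1) * (x + 1) = 1) by (field; lra). nra. }
  assert (Hw : Cmod w = a * L). { unfold w. rewrite Cmod_mult, Cmod_R, Rabs_pos_eq; auto. }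
  assert (Hwx : Cmod w * x <= a). { rewrite Hw. nra. }
  assert (Hw2 : Cmod w <= 1/2). { rewrite Hw. nra. }
  assert (HE := Cexp_bnd w Hw2). fold E in HE.
  assert (HE0 := Cmod_ge_0 E).
  assert (HEx : Cmod E * (x * x) <= 8 * a^2).
  { assert (Hw0 := Cmod_ge_0 w). assert ((Cmod w * x)^2 <= a^2) by (apply pow_incr; nra). nra. }
  assert (Hnum : Cmod (Cplus (Cmult (RtoC (x + 1)) E) (Cmult z (RtoC ((x + 1) * L - 1)))) * x <= 16 * a^2 + a).
  { eapply Rle_trans. apply Rmult_le_compat_r. lra. apply Cmod_triangle.
    rewrite !Cmod_mult, !Cmod_R. fold a.
    rewrite (Rabs_pos_eq (x + 1)) by lra. rewrite (Rabs_pos_eq ((x + 1) * L - 1)) by lra.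
    assert (T1 : (x + 1) * Cmod E * x <= 16 * a^2) by nra.
    assert (T2 : a * ((x + 1) * L - 1) * x <= a).
    { assert (((x + 1) * L - 1) * x <= 1) by nra. nra. }
    nra. }
  assert (Hd : (x + 1) / 2 <= Cmod (Cplus z (RtoC (x + 1)))).
  { assert (T : Cmod (RtoC (x + 1)) <= Cmod (Cplus z (RtoC (x + 1))) + Cmod (Copp z)).
    { replace (RtoC (x + 1)) with (Cplus (Cplus z (RtoC (x + 1))) (Copp z)) at 1 by ring. apply Cmod_triangle. }
    rewrite Cmod_R, Cmod_opp, Rabs_pos_eq in T by lra. fold a in T. lra. }
  set (nm := Cmod (Cplus (Cmult (RtoC (x + 1)) E) (Cmult z (RtoC ((x + 1) * L - 1))))) in *.
  set (dn := Cmod (Cplus z (RtoC (x + 1)))) in *.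
  assert (Hnm0 : 0 <= nm) by apply Cmod_ge_0.
  apply Rmult_le_reg_r with (x * (x + 1) * dn). apply Rmult_lt_0_compat; nra.
  replace (nm / dn * (x * (x + 1) * dn)) with (nm * x * (x + 1)) by (field; lra).
  replace (2 * (16 * a ^ 2 + a) / (x * (x + 1)) * (x * (x + 1) * dn)) with (2 * (16 * a ^ 2 + a) * dn) by (field; lra).
  assert (nm * x * (x + 1) <= (16 * a ^ 2 + a) * (x + 1)) by nra.
  nra.
Qed.
Lemma real_series_tele (Bk : R) (N0 : nat) : (1 <= N0)%nat ->
  is_series (fun k => Bk * (/ INR (k + N0) - / INR (S (k + N0)))) (Bk / INR N0).
Proof.
  intros HN0.
  assert (Hs : forall m, sum_n (fun k => Bk * (/ INR (k + N0) - / INR (S (k + N0)))) m = Bk * (/ INR N0 - / INR (S (m + N0)))).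
  { induction m.
    - rewrite sum_O. simpl. reflexivity.
    - rewrite sum_Sn, IHm. change plus with Rplus. replace (S m + N0)%nat with (S (m + N0)) by lia. match goal with |- @eq _ ?x ?y => change (@eq R x y) end. ring. }
  assert (P0 : 0 < INR N0) by (apply lt_0_INR; lia).
  unfold is_series. apply (proj1 (is_lim_seq_spec _ (Finite (Bk / INR N0)))).
  intros [eps He]. simpl.
  destruct (nat_big ((Rabs Bk + 1) / eps)) as [M HM].
  exists M. intros m Hm. rewrite Hs.
  assert (P1 : 0 < INR (S (m + N0))) by (apply lt_0_INR; lia).
  assert (HMm : INR M <= INR (S (m + N0))) by (apply le_INR; lia).
  replace (Bk * (/ INR N0 - / INR (S (m + N0))) - Bk / INR N0) with (- (Bk / INR (S (m + N0)))) by (field; lra).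
  rewrite Rabs_Ropp. unfold Rdiv. rewrite Rabs_mult, Rabs_inv, (Rabs_pos_eq (INR _)) by lra.
  assert (HB := Rabs_pos Bk).
  apply Rmult_lt_reg_r with (INR (S (m + N0))). lra.
  rewrite Rmult_assoc, Rinv_l, Rmult_1_r by lra.
  assert ((Rabs Bk + 1) / eps * eps = Rabs Bk + 1) by (field; lra).
  assert ((Rabs Bk + 1) / eps * eps < INR (S (m + N0)) * eps) by (apply Rmult_lt_compat_r; lra).
  lra.
Qed.

Lemma Gamma_conv (z : C) : nonint z -> exists v, slim (Gamma_seq z) v.
Proof.
  intros Hz. destruct (ratio_bound z Hz) as [N0 [K [HN0 [HK Hr]]]].
  set (b := Gamma_seq z).
  assert (Hrec : forall n, (N0 <= n)%nat -> b (S n) = Cmult (b n) (rho_n z n)).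
  { intros n Hn. apply Gamma_seq_S; auto. lia. }
  set (G := fun n => Cmod (b n) * exp (K / INR n)).
  assert (HG : forall n, (N0 <= n)%nat -> G (S n) <= G n).
  { intros n Hn. unfold G. rewrite Hrec by auto. rewrite Cmod_mult.
    assert (P0 : 0 < INR n) by (apply lt_0_INR; lia).
    assert (P1 : 0 < INR (S n)) by (apply lt_0_INR; lia).
    assert (E1 : K / (INR n * INR (S n)) = K / INR n - K / INR (S n)) by (rewrite S_INR in *; field; lra).
    assert (Hrho : Cmod (rho_n z n) <= 1 + (K / INR n - K / INR (S n))).
    { rewrite <- E1. assert (T := Hr n Hn).
      replace (rho_n z n) with (Cplus (Cminus (rho_n z n) (RtoC 1)) (RtoC 1)) by ring.
      eapply Rle_trans. apply Cmod_triangle. rewrite Cmod_1. lra. }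
    assert (Hexp := exp_ineq1_le (K / INR n - K / INR (S n))).
    assert (Hb0 := Cmod_ge_0 (b n)).
    assert (Hrho0 := Cmod_ge_0 (rho_n z n)).
    assert (Ee : exp (K / INR n) = exp (K / INR n - K / INR (S n)) * exp (K / INR (S n))).
    { rewrite <- exp_plus. f_equal. ring. }
    rewrite Ee. assert (Hp := exp_pos (K / INR (S n))).
    assert (Cmod (b n) * Cmod (rho_n z n) <= Cmod (b n) * exp (K / INR n - K / INR (S n))).
    { apply Rmult_le_compat_l; lra. }
    rewrite <- Rmult_assoc. apply Rmult_le_compat_r; lra. }
  assert (HGb : forall k, G (k + N0)%nat <= G N0).
  { induction k. simpl. lra. eapply Rle_trans. 2: exact IHk. simpl. apply HG. lia. }
  set (B := G N0).
  assert (Hbb : forall n, (N0 <= n)%nat -> Cmod (b n) <= B).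
  { intros n Hn. replace n with ((n - N0) + N0)%nat by lia. eapply Rle_trans. 2: apply (HGb (n - N0)%nat).
    unfold G. assert (P0 : 0 < INR (n - N0 + N0)) by (apply lt_0_INR; lia).
    assert (1 <= exp (K / INR (n - N0 + N0))).
    { assert (H := exp_ineq1_le (K / INR (n - N0 + N0))). assert (0 <= K / INR (n - N0 + N0)) by (apply Rdiv_le_0_compat; lra). lra. }
    assert (Hb0 := Cmod_ge_0 (b (n - N0 + N0)%nat)). cbv beta. nra. }
  assert (HB0 : 0 <= B). { assert (X := Hbb N0 (Nat.le_refl _)). assert (Y := Cmod_ge_0 (b N0)). lra. }
  set (a := fun k => Cminus (b (S (k + N0))) (b (k + N0)%nat)).
  assert (Ha : forall k, Cmod (a k) <= B * K * (/ INR (k + N0) - / INR (S (k + N0)))).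
  { intros k. unfold a. rewrite Hrec by lia.
    replace (Cminus (Cmult (b (k + N0)%nat) (rho_n z (k + N0))) (b (k + N0)%nat)) with
      (Cmult (b (k + N0)%nat) (Cminus (rho_n z (k + N0)) (RtoC 1))) by ring.
    rewrite Cmod_mult.
    assert (P0 : 0 < INR (k + N0)) by (apply lt_0_INR; lia).
    assert (P1 : 0 < INR (S (k + N0))) by (apply lt_0_INR; lia).
    assert (E1 : K / (INR (k + N0) * INR (S (k + N0))) = K * (/ INR (k + N0) - / INR (S (k + N0)))) by (rewrite S_INR in *; field; lra).
    assert (T := Hr (k + N0)%nat ltac:(lia)). rewrite E1 in T.
    rewrite Rmult_assoc. apply Rmult_le_compat; try apply Cmod_ge_0; auto. apply Hbb. lia. }
  assert (Hex : ex_series a).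
  { apply (@ex_series_le C_AbsRing C_CompleteNormedModule a (fun k => B * K * (/ INR (k + N0) - / INR (S (k + N0))))).
    intros k. change norm with Cmod. apply Ha.
    eexists. apply real_series_tele. auto. }
  destruct Hex as [Sm HS].
  assert (Hsum : forall m, sum_n a m = Cminus (b (S (m + N0))) (b N0)).
  { induction m.
    - rewrite sum_O. reflexivity.
    - rewrite sum_Sn, IHm. change plus with Cplus. unfold a. replace (S m + N0)%nat with (S (m + N0)) by lia. match goal with |- @eq _ ?x ?y => change (@eq C x y) end. ring. }
  exists (Cplus Sm (b N0)).
  apply filterlim_slim in HS.
  intros eps He. destruct (HS eps He) as [M HM].
  exists (S (M + N0)). intros n Hn.
  replace n with (S ((n - N0 - 1) + N0)) by lia.
  specialize (HM (n - N0 - 1)%nat ltac:(lia)). rewrite Hsum in HM.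
  replace (Cminus (b (S (n - N0 - 1 + N0))) (Cplus Sm (b N0))) with (Cminus (Cminus (b (S (n - N0 - 1 + N0))) (b N0)) Sm) by ring.
  exact HM.
Qed.

Lemma CGamma_lim (z : C) : nonint z -> slim (Gamma_seq z) (CGamma z).
Proof.
  intros Hz. apply filterlim_slim. unfold CGamma. apply epsilon_spec.
  destruct (Gamma_conv z Hz) as [v Hv]. exists v. apply slim_filterlim. exact Hv.
Qed.

Lemma CGamma_shift (z : C) : nonint z -> CGamma (Cminus z (RtoC 1)) = Cdiv (CGamma z) (Cminus z (RtoC 1)).
Proof.
  intros Hz.
  assert (H1 := CGamma_lim _ (nonint_m1 z Hz)).
  assert (H2 := CGamma_lim z Hz).
  assert (Hz1 := nonint_ne1 z Hz).
  assert (Hq : slim (fun n => Cdiv (Cplus z (RtoC (INR n))) (Cmult (RtoC (INR n)) (Cminus z (RtoC 1)))) (Cinv (Cminus z (RtoC 1)))).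
  { intros eps He.
    assert (Hm : 0 < Cmod (Cminus z (RtoC 1))) by (apply Cmod_gt_0; auto).
    destruct (nat_big (Cmod z / (eps * Cmod (Cminus z (RtoC 1))))) as [M HM].
    exists (S M). intros n Hn.
    assert (P : 0 < INR n) by (apply lt_0_INR; lia).
    assert (HMn : INR M <= INR n) by (apply le_INR; lia).
    assert (Hn0 : RtoC (INR n) <> RtoC 0). { intro E. apply RtoC_inj in E. lra. }
    replace (Cminus (Cdiv (Cplus z (RtoC (INR n))) (Cmult (RtoC (INR n)) (Cminus z (RtoC 1)))) (Cinv (Cminus z (RtoC 1))))
      with (Cdiv z (Cmult (RtoC (INR n)) (Cminus z (RtoC 1)))) by (field; auto).
    rewrite Cmod_div by (apply Cmult_neq_0; auto). rewrite Cmod_mult, Cmod_R, Rabs_pos_eq by lra.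
    assert (Hz0 := Cmod_ge_0 z).
    apply Rmult_lt_reg_r with (INR n * Cmod (Cminus z (RtoC 1))). apply Rmult_lt_0_compat; lra.
    unfold Rdiv. rewrite Rmult_assoc, Rinv_l, Rmult_1_r by (apply Rgt_not_eq, Rmult_lt_0_compat; lra).
    assert (Cmod z / (eps * Cmod (Cminus z (RtoC 1))) * (eps * Cmod (Cminus z (RtoC 1))) = Cmod z) by (field; lra).
    assert (Cmod z / (eps * Cmod (Cminus z (RtoC 1))) * (eps * Cmod (Cminus z (RtoC 1))) < INR n * (eps * Cmod (Cminus z (RtoC 1)))).
    { apply Rmult_lt_compat_r. apply Rmult_lt_0_compat; lra. lra. }
    nra. }
  assert (H3 := slim_mult _ _ _ _ H2 Hq).
  assert (H4 : slim (Gamma_seq (Cminus z (RtoC 1))) (Cmult (CGamma z) (Cinv (Cminus z (RtoC 1))))).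
  { apply (slim_ext _ _ _ 1%nat) with (2 := H3). intros n Hn. symmetry. apply Gamma_seq_shift; auto. }
  apply (slim_unique _ _ _ H1 H4).
Qed.
Lemma Cprod1_S (n : nat) (F : nat -> C) : Cprod1 (S n) F = Cmult (Cprod1 n F) (F (S n)).
Proof. reflexivity. Qed.

Lemma nonint_minus_nat (z : C) (l : nat) : nonint z -> nonint (Cminus z (RtoC (INR l))).
Proof.
  intros H k E. apply (H (k + Z.of_nat l)%Z). rewrite plus_IZR, <- INR_IZR_INZ.
  replace z with (Cplus (Cminus z (RtoC (INR l))) (RtoC (INR l))) by ring. rewrite E, RtoC_plus. reflexivity.
Qed.

Lemma CGamma_shift_n (z : C) (l : nat) : nonint z ->
  CGamma (Cminus z (RtoC (INR l))) = Cmult (CGamma z) (Cprod1 l (fun m => Cinv (Cminus z (RtoC (INR m))))).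
Proof.
  intros Hz. induction l.
  - simpl. replace (Cminus z (RtoC 0)) with z by ring. ring.
  - replace (Cminus z (RtoC (INR (S l)))) with (Cminus (Cminus z (RtoC (INR l))) (RtoC 1))
      by (rewrite S_INR, RtoC_plus; ring).
    rewrite CGamma_shift by (apply nonint_minus_nat; auto).
    rewrite IHl. rewrite Cprod1_S. unfold Cdiv.
    replace (Cminus (Cminus z (RtoC (INR l))) (RtoC 1)) with (Cminus z (RtoC (INR (S l))))
      by (rewrite S_INR, RtoC_plus; ring).
    ring.
Qed.

Lemma nonint_nbhd (w : C) : exists d, 0 < d /\ forall x, 0 < Cmod (Cminus x w) < d -> nonint x.
Proof.
  destruct (archimed (Re w)) as [Hu1 Hu2].
  set (k1 := (up (Re w) - 1)%Z).
  assert (Hk1 : IZR k1 <= Re w < IZR k1 + 1) by (unfold k1; rewrite minus_IZR; simpl; lra).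
  set (dd := fun k : Z => if Ceq_dec w (RtoC (IZR k)) then 1 else Cmod (Cminus w (RtoC (IZR k)))).
  assert (Hdd : forall k, 0 < dd k).
  { intros k. unfold dd. destruct (Ceq_dec w (RtoC (IZR k))). lra. apply Cmod_gt_0. intro E. apply n. apply Ceq_minus. auto. }
  exists (Rmin 1 (Rmin (dd k1) (dd (k1 + 1)%Z))). split.
  { apply Rmin_pos. lra. apply Rmin_pos; auto. }
  intros x Hx k E. subst x.
  assert (Hre := re_le_Cmod (Cminus (RtoC (IZR k)) w)).
  assert (Hre' : Re (Cminus (RtoC (IZR k)) w) = IZR k - Re w) by (unfold Cminus; rewrite re_plus, re_opp, re_RtoC; ring).
  rewrite Hre' in Hre.
  assert (Hm1 := Rmin_l 1 (Rmin (dd k1) (dd (k1 + 1)%Z))).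
  assert (Hm2 := Rmin_r 1 (Rmin (dd k1) (dd (k1 + 1)%Z))).
  assert (Hm3 := Rmin_l (dd k1) (dd (k1 + 1)%Z)).
  assert (Hm4 := Rmin_r (dd k1) (dd (k1 + 1)%Z)).
  assert (Habs : Rabs (IZR k - Re w) < 1) by lra.
  apply Rabs_def2 in Habs. destruct Habs as [Ha1 Ha2].
  assert (Hk : k = k1 \/ k = (k1 + 1)%Z).
  { assert (A1 : (k1 - 1 < k)%Z) by (apply lt_IZR; rewrite minus_IZR; simpl; lra).
    assert (A2 : (k < k1 + 2)%Z) by (apply lt_IZR; rewrite plus_IZR; simpl; lra). lia. }
  assert (Hgen : forall kk, k = kk -> Cmod (Cminus (RtoC (IZR k)) w) < dd kk -> False).
  { intros kk Ek Hlt. subst kk. unfold dd in Hlt. destruct (Ceq_dec w (RtoC (IZR k))) as [Ew|Ew].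
    - rewrite <- Ew in Hx. replace (Cminus w w) with (RtoC 0) in Hx by ring. rewrite Cmod_0 in Hx. lra.
    - rewrite Cmod_minus_sym in Hlt. lra. }
  destruct Hk as [Hk|Hk].
  - apply (Hgen k1 Hk). lra.
  - apply (Hgen (k1 + 1)%Z Hk). lra.
Qed.

Lemma fin_min (P : nat -> R -> Prop) (f : nat) :
  (forall j d d', 0 < d' <= d -> P j d -> P j d') ->
  (forall j, (1 <= j <= f)%nat -> exists d, 0 < d /\ P j d) ->
  exists d, 0 < d /\ forall j, (1 <= j <= f)%nat -> P j d.
Proof.
  intros Hmono. induction f; intros H.
  - exists 1. split. lra. intros j Hj. lia.
  - destruct IHf as [d1 [Hd1 H1]]. intros j Hj. apply H. lia.
    destruct (H (S f) ltac:(lia)) as [d2 [Hd2 H2]].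
    exists (Rmin d1 d2). split. apply Rmin_pos; auto.
    intros j Hj. destruct (Nat.eq_dec j (S f)) as [E|E].
    + subst j. apply (Hmono _ d2). split. apply Rmin_pos; auto. apply Rmin_r. auto.
    + apply (Hmono _ d1). split. apply Rmin_pos; auto. apply Rmin_l. apply H1. lia.
Qed.

Lemma Cprod1_ext (f : nat) (F G : nat -> C) :
  (forall j, (1 <= j <= f)%nat -> F j = G j) -> Cprod1 f F = Cprod1 f G.
Proof.
  induction f; intros H; simpl. reflexivity.
  rewrite IHf. rewrite H. reflexivity. lia. intros j Hj. apply H. lia.
Qed.

Lemma Cprod1_mult (f : nat) (F G : nat -> C) :
  Cprod1 f (fun j => Cmult (F j) (G j)) = Cmult (Cprod1 f F) (Cprod1 f G).
Proof. induction f; simpl. ring. rewrite IHf. ring. Qed.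

Lemma Rprod1_ext (f : nat) (F G : nat -> R) :
  (forall j, (1 <= j <= f)%nat -> F j = G j) -> Rprod1 f F = Rprod1 f G.
Proof.
  induction f; intros H; simpl. reflexivity.
  rewrite IHf. rewrite H. reflexivity. lia. intros j Hj. apply H. lia.
Qed.

Lemma Rprod1_le (f : nat) (F G : nat -> R) :
  (forall j, (1 <= j <= f)%nat -> 0 <= F j <= G j) -> Rprod1 f F <= Rprod1 f G.
Proof.
  induction f; intros H; simpl. lra.
  apply Rmult_le_compat. apply Rprod1_ge0. intros j Hj. apply H. lia.
  apply H. lia. apply IHf. intros j Hj. apply H. lia. apply H. lia.
Qed.

Lemma Rprod1_pos (f : nat) (F : nat -> R) : (forall j, (1 <= j <= f)%nat -> 0 < F j) -> 0 < Rprod1 f F.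
Proof.
  induction f; intros H; simpl. lra. apply Rmult_lt_0_compat. apply IHf. intros j Hj; apply H; lia. apply H; lia.
Qed.

Lemma Rprod1_const (l : nat) (c : R) : Rprod1 l (fun _ => c) = c ^ l.
Proof. induction l; simpl. reflexivity. rewrite IHl. ring. Qed.

Lemma Rprod1_pow (f l : nat) (F : nat -> R) : Rprod1 f (fun j => F j ^ l) = (Rprod1 f F) ^ l.
Proof. induction f; simpl. rewrite pow1. reflexivity. rewrite IHf. rewrite Rpow_mult_distr. reflexivity. Qed.

Lemma Rprod1_inv (f : nat) (F : nat -> R) : (forall j, (1 <= j <= f)%nat -> 0 < F j) ->
  Rprod1 f (fun j => / F j) = / Rprod1 f F.
Proof.
  induction f; intros H; simpl. field.
  rewrite IHf. rewrite Rinv_mult. reflexivity. intros j Hj; apply H; lia.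
Qed.

Lemma Rmax1_ge (n : nat) (F : nat -> R) : forall j, (1 <= j <= n)%nat -> F j <= Rmax1 n F.
Proof.
  induction n; intros j Hj. lia.
  destruct n. replace j with 1%nat by lia. simpl. lra.
  change (Rmax1 (S (S n)) F) with (Rmax (Rmax1 (S n) F) (F (S (S n)))).
  destruct (Nat.eq_dec j (S (S n))) as [E|E].
  - subst. apply Rmax_r.
  - eapply Rle_trans. apply IHn. lia. apply Rmax_l.
Qed.

Lemma series_norm_bound (a : nat -> C) (b : nat -> R) (Sa : C) (Sb : R) :
  is_series a Sa -> is_series b Sb -> (forall l, Cmod (a l) <= b l) -> Cmod Sa <= Sb.
Proof.
  intros Ha Hb Hab.
  assert (Hp : forall m, Cmod (sum_n a m) <= sum_n b m).
  { induction m.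
    - rewrite !sum_O. apply Hab.
    - rewrite !sum_Sn. eapply Rle_trans. apply Cmod_triangle.
      apply Rplus_le_compat. exact IHm. apply Hab. }
  destruct (Rle_dec (Cmod Sa) Sb) as [H|H]; auto. exfalso.
  apply Rnot_le_lt in H.
  remember ((Cmod Sa - Sb) / 2) as eps eqn:Heps.
  assert (He : 0 < eps) by lra.
  apply filterlim_slim in Ha. destruct (Ha eps He) as [N1 H1].
  apply (proj2 (is_lim_seq_spec _ (Finite Sb))) in Hb. destruct (Hb (mkposreal eps He)) as [N2 H2].
  specialize (H1 (N1 + N2)%nat ltac:(lia)). specialize (H2 (N1 + N2)%nat ltac:(lia)). simpl in H2.
  specialize (Hp (N1 + N2)%nat).
  assert (T : Cmod Sa <= Cmod (sum_n a (N1 + N2)) + Cmod (Cminus (sum_n a (N1 + N2)) Sa)).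
  { rewrite Cmod_minus_sym. replace Sa with (Cplus (sum_n a (N1 + N2)) (Cminus Sa (sum_n a (N1 + N2)))) at 1 by ring.
    apply Cmod_triangle. }
  apply Rabs_def2 in H2.
  assert (X1 : Cmod (Cminus (@sum_n C_AbelianMonoid a (N1 + N2)) Sa) < eps) by exact H1.
  assert (X2 : @sum_n R_AbelianMonoid b (N1 + N2) - Sb < eps) by exact (proj1 H2).
  assert (X3 : Cmod (@sum_n C_AbelianMonoid a (N1 + N2)) <= @sum_n R_AbelianMonoid b (N1 + N2)) by exact Hp.
  clear H1 H2 Hp Ha Hb. lra.
Qed.
Lemma LaurB_scal (phi : C -> C) (N : nat) (M : R) (K : C) :
  LaurB phi N M -> LaurB (fun s => Cmult K (phi s)) N (Cmod K * M).
Proof.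
  intros [c [Hc Hb]]. exists (fun j => Cmult K (c j)). split.
  apply Laur_scal; auto.
  intros j Hj. rewrite Cmod_mult. apply Rmult_le_compat_l. apply Cmod_ge_0. auto.
Qed.

Lemma exp_INR_mult (l : nat) (x : R) : exp (x * INR l) = exp x ^ l.
Proof.
  induction l. simpl. rewrite Rmult_0_r. apply exp_0.
  rewrite S_INR. replace (x * (INR l + 1)) with (x * INR l + x) by ring.
  rewrite exp_plus, IHl. simpl. ring.
Qed.

Lemma key (f : nat) (la : R) (mu : nat -> C) (A : C) (rho : C) (n : nat) (c : nat -> C) (M : R) (l : nat) (g : C -> C) :
  0 < la < 1 -> (1 <= n)%nat -> 0 <= M -> (forall j, (1 <= j <= n)%nat -> Cmod (c j) <= M) ->
  (forall s, g s = Cmult (Cexp (Cmult A (Cminus (RtoC (1/2)) s)))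
                         (Cprod1 f (fun j => CGamma (Cplus (Cmult (RtoC la) s) (mu j))))) ->
  polar_part g rho n c ->
  (forall j, (1 <= j <= f)%nat -> Re (Cplus (Cmult (RtoC la) rho) (mu j)) <= 0) ->
  (1 <= l)%nat ->
  exists r, is_residue g (Cminus rho (RtoC (INR l / la))) r /\
    Cmod r <= exp (Re A * (INR l / la)) * M *
      Rprod1 f (fun j => Rprod1 l (fun m => / (Cmod (Cminus (Cplus (Cmult (RtoC la) rho) (mu j)) (RtoC (INR m))) - la))).
Proof.
  intros Hla Hn HM Hc Hg Hpp Hre Hl.
  assert (Hla0 : RtoC la <> RtoC 0). { intro E. apply RtoC_inj in E. lra. }
  pose (w := fun j => Cplus (Cmult (RtoC la) rho) (mu j)).
  pose (K := Cexp (Cmult A (RtoC (INR l / la)))).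
  assert (HB0 : LaurB (fun s => g (Cplus s rho)) n M). { exists c. split; auto. }
  assert (HB1 := LaurB_scal _ _ _ K HB0).
  assert (HM1 : 0 <= Cmod K * M). { apply Rmult_le_pos; auto. apply Cmod_ge_0. }
  assert (Hal : forall j m, (1 <= j <= f)%nat -> (1 <= m <= l)%nat -> 0 <= la < Cmod (Cminus (w j) (RtoC (INR m)))).
  { intros j m Hj Hm. split. lra.
    assert (H1 := re_le_Cmod (Cminus (w j) (RtoC (INR m)))).
    assert (E : Re (Cminus (w j) (RtoC (INR m))) = Re (w j) - INR m) by (unfold Cminus; rewrite re_plus, re_opp, re_RtoC; ring).
    rewrite E in H1. assert (H2 := Hre j Hj). fold (w j) in H2.
    assert (H3 : 1 <= INR m) by (apply (le_INR 1); lia).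
    rewrite Rabs_left1 in H1 by lra. lra. }
  assert (HB2 := LaurB_chain2 _ _ _ la l f (fun j m => Cminus (w j) (RtoC (INR m))) HB1 HM1 Hal).
  destruct HB2 as [c' [HL Hb]].
  destruct (fin_min (fun j d => forall x, 0 < Cmod (Cminus x (w j)) < d -> nonint x) f) as [d0 [Hd0 Hd]].
  { intros j d d' Hd' H x Hx. apply H. lra. }
  { intros j _. apply nonint_nbhd. }
  assert (Hshift : forall s, 0 < Cmod s < d0 / la ->
     Cmult (Cmult K (g (Cplus s rho)))
       (Cprod1 f (fun j => Cprod1 l (fun m => Cinv (Cplus (Cminus (w j) (RtoC (INR m))) (Cmult (RtoC la) s)))))
     = g (Cplus s (Cminus rho (RtoC (INR l / la))))).
  { intros s Hs.
    assert (Hx : forall j, (1 <= j <= f)%nat -> nonint (Cplus (w j) (Cmult (RtoC la) s))).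
    { intros j Hj. apply (Hd j Hj).
      replace (Cminus (Cplus (w j) (Cmult (RtoC la) s)) (w j)) with (Cmult (RtoC la) s) by ring.
      rewrite Cmod_mult, Cmod_R, Rabs_pos_eq by lra. split. apply Rmult_lt_0_compat; lra.
      apply Rmult_lt_reg_r with (/ la). apply Rinv_0_lt_compat; lra.
      rewrite Rmult_comm, <- Rmult_assoc, Rinv_l, Rmult_1_l by lra. apply Hs. }
    rewrite !Hg.
    assert (E1 : Cprod1 f (fun j => CGamma (Cplus (Cmult (RtoC la) (Cplus s (Cminus rho (RtoC (INR l / la))))) (mu j))) =
                 Cprod1 f (fun j => Cmult (CGamma (Cplus (w j) (Cmult (RtoC la) s)))
                    (Cprod1 l (fun m => Cinv (Cplus (Cminus (w j) (RtoC (INR m))) (Cmult (RtoC la) s)))))).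
    { apply Cprod1_ext. intros j Hj.
      replace (Cplus (Cmult (RtoC la) (Cplus s (Cminus rho (RtoC (INR l / la))))) (mu j))
        with (Cminus (Cplus (w j) (Cmult (RtoC la) s)) (RtoC (INR l))).
      2: { unfold w. rewrite RtoC_div by lra. field. auto. }
      rewrite CGamma_shift_n by (apply Hx; auto). f_equal. apply Cprod1_ext. intros m Hm. f_equal. ring. }
    assert (E2 : Cprod1 f (fun j => CGamma (Cplus (Cmult (RtoC la) (Cplus s rho)) (mu j))) =
                 Cprod1 f (fun j => CGamma (Cplus (w j) (Cmult (RtoC la) s)))).
    { apply Cprod1_ext. intros j Hj. f_equal. unfold w. ring. }
    rewrite E1, E2, Cprod1_mult.
    assert (E3 : Cexp (Cmult A (Cminus (RtoC (1 / 2)) (Cplus s (Cminus rho (RtoC (INR l / la)))))) =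
                 Cmult (Cexp (Cmult A (Cminus (RtoC (1 / 2)) (Cplus s rho)))) K).
    { unfold K. rewrite <- Cexp_plus. f_equal. ring. }
    rewrite E3. ring. }
  assert (HL' : Laur (fun s => g (Cplus s (Cminus rho (RtoC (INR l / la))))) n c').
  { apply (Laur_ext _ _ _ _ (d0 / la) HL). apply Rdiv_lt_0_compat; lra. exact Hshift. }
  exists (c' 1%nat). split.
  - exists n, c'. split. exact HL'. destruct n. lia. reflexivity.
  - assert (X := Hb 1%nat ltac:(lia)).
    assert (EK : Cmod K = exp (Re A * (INR l / la))).
    { unfold K. rewrite Cmod_Cexp, re_scal_r. reflexivity. }
    rewrite EK in X. exact X.
Qed.
Lemma cmod_cmp (w : C) (m : nat) : Re w <= 0 -> (1 <= m)%nat ->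
  Cmod (Cminus (RtoC 1) w) <= Cmod (Cminus w (RtoC (INR m))).
Proof.
  intros Hw Hm. assert (H1 : 1 <= INR m) by (apply (le_INR 1); lia).
  destruct w as [a b]. simpl in Hw. unfold Cmod. apply sqrt_le_1_alt. simpl. nra.
Qed.

Lemma D_pos (w : C) (la : R) : Re w <= 0 -> la < 1 -> 0 < Cmod (Cminus (RtoC 1) w) - la.
Proof.
  intros Hw Hla. assert (H := re_le_Cmod (Cminus (RtoC 1) w)).
  assert (E : Re (Cminus (RtoC 1) w) = 1 - Re w) by (unfold Cminus; rewrite re_plus, re_opp, re_RtoC; ring).
  rewrite E in H. assert (H2 := Rle_abs (1 - Re w)). lra.
Qed.

Lemma prod_bound (f l : nat) (la : R) (w : nat -> C) : 0 < la < 1 ->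
  (forall j, (1 <= j <= f)%nat -> Re (w j) <= 0) ->
  Rprod1 f (fun j => Rprod1 l (fun m => / (Cmod (Cminus (w j) (RtoC (INR m))) - la))) <=
  (/ Rprod1 f (fun j => Cmod (Cminus (RtoC 1) (w j)) - la)) ^ l.
Proof.
  intros Hla Hw.
  rewrite <- Rprod1_inv by (intros j Hj; apply D_pos; auto; lra).
  rewrite <- Rprod1_pow.
  apply Rprod1_le. intros j Hj.
  assert (HD := D_pos (w j) la (Hw j Hj) ltac:(lra)).
  split.
  - apply Rprod1_ge0. intros m Hm. assert (X := cmod_cmp (w j) m (Hw j Hj) ltac:(lia)).
    left. apply Rinv_0_lt_compat. lra.
  - rewrite <- Rprod1_const. apply Rprod1_le. intros m Hm.
    assert (X := cmod_cmp (w j) m (Hw j Hj) ltac:(lia)).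
    split. left. apply Rinv_0_lt_compat. lra.
    apply Rinv_le_contravar. lra. lra.
Qed.

Theorem lemma5p2 (f : nat) (lam : nat -> R) (mu : nat -> C) (eta u : R)
  (rho : C) (n : nat) (c : nat -> C) :
  (1 <= f)%nat ->
  (forall j, (1 <= j <= f)%nat -> 0 < lam j /\ lam j = lam 1%nat) ->
  lam 1%nat < 1 ->
  -1 < eta < 1 ->
  let g : C -> C := fun s =>
    Cmult (Cexp (Cmult (Cplus (RtoC u) (Cmult Ci (RtoC (PI * INR f / 4 * eta))))
                       (Cminus (RtoC (1/2)) s)))
          (Cprod1 f (fun j => CGamma (Cplus (Cmult (RtoC (lam j)) s) (mu j)))) in
  pole_of_order g rho n c ->
  (forall j, (1 <= j <= f)%nat -> Re (Cplus (Cmult (RtoC (lam j)) rho) (mu j)) <= 0) ->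
  exp (u / lam 1%nat) /
    Rprod1 f (fun j => Cmod (Cminus (Cminus (RtoC 1) (Cmult (RtoC (lam j)) rho)) (mu j)) - lam j)
    < 1/2 ->
  exists r : nat -> C,
    (forall l, (1 <= l)%nat -> is_residue g (Cminus rho (RtoC (INR l / lam 1%nat))) (r l)) /\
    exists Sum : C, is_series (fun l => r (S l)) Sum /\ Cmod Sum < Rmax1 n (fun j => Cmod (c j)).
Proof.
  intros Hf Hlam Hl1 Heta g Hpole Hre Hq.
  assert (Hla : 0 < lam 1%nat) by (apply (Hlam 1%nat); lia).
  destruct Hpole as [Hn1 [Hcn Hpp]].
  assert (HM : forall j, (1 <= j <= n)%nat -> Cmod (c j) <= Rmax1 n (fun j => Cmod (c j))).
  { intros j Hj. apply (Rmax1_ge n (fun j => Cmod (c j))). auto. }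
  assert (HMpos : 0 < Rmax1 n (fun j => Cmod (c j))).
  { apply Rlt_le_trans with (Cmod (c n)). apply Cmod_gt_0; auto. apply HM; lia. }
  remember (Rmax1 n (fun j => Cmod (c j))) as M eqn:HMdef.
  remember (lam 1%nat) as la eqn:Hladef.
  remember (Cplus (RtoC u) (Cmult Ci (RtoC (PI * INR f / 4 * eta)))) as A eqn:HAdef.
  assert (HReA : Re A = u). { rewrite HAdef. simpl. ring. }
  assert (Hg : forall s, g s = Cmult (Cexp (Cmult A (Cminus (RtoC (1/2)) s)))
                   (Cprod1 f (fun j => CGamma (Cplus (Cmult (RtoC la) s) (mu j))))).
  { intros s. unfold g. rewrite HAdef. f_equal. apply Cprod1_ext. intros j Hj. rewrite (proj2 (Hlam j Hj)). reflexivity. }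
  assert (Hre' : forall j, (1 <= j <= f)%nat -> Re (Cplus (Cmult (RtoC la) rho) (mu j)) <= 0).
  { intros j Hj. rewrite <- (proj2 (Hlam j Hj)). apply Hre; auto. }
  remember (Rprod1 f (fun j => Cmod (Cminus (RtoC 1) (Cplus (Cmult (RtoC la) rho) (mu j))) - la)) as PD eqn:HPD.
  assert (HPDpos : 0 < PD).
  { rewrite HPD. apply Rprod1_pos. intros j Hj. apply D_pos; auto. }
  assert (Hq' : exp (u / la) / PD < 1/2).
  { rewrite HPD. erewrite Rprod1_ext. exact Hq. intros j Hj. simpl. rewrite (proj2 (Hlam j Hj)).
    f_equal. f_equal. ring. }
  remember (exp (u / la) / PD) as q eqn:Hqdef.
  assert (Hqpos : 0 < q). { rewrite Hqdef. apply Rdiv_lt_0_compat; auto. apply exp_pos. }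
  assert (Hkey : forall l, (1 <= l)%nat -> exists r, is_residue g (Cminus rho (RtoC (INR l / la))) r /\ Cmod r <= M * q ^ l).
  { intros l Hl.
    destruct (key f la mu A rho n c M l g ltac:(lra) Hn1 ltac:(lra) HM Hg Hpp Hre' Hl) as [r [Hr1 Hr2]].
    exists r. split; auto. eapply Rle_trans. exact Hr2.
    assert (Hpb := prod_bound f l la (fun j => Cplus (Cmult (RtoC la) rho) (mu j)) ltac:(lra) Hre').
    cbv beta in Hpb. rewrite <- HPD in Hpb.
    rewrite HReA.
    replace (u * (INR l / la)) with (u / la * INR l) by (field; lra).
    rewrite exp_INR_mult.
    rewrite Hqdef. unfold Rdiv at 2. rewrite Rpow_mult_distr.
    assert (0 <= exp (u / la) ^ l) by (apply pow_le; left; apply exp_pos).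
    replace (exp (u / la) ^ l * M * Rprod1 f (fun j => Rprod1 l (fun m => / (Cmod (Cminus (Cplus (Cmult (RtoC la) rho) (mu j)) (RtoC (INR m))) - la))))
      with ((M * exp (u / la) ^ l) * Rprod1 f (fun j => Rprod1 l (fun m => / (Cmod (Cminus (Cplus (Cmult (RtoC la) rho) (mu j)) (RtoC (INR m))) - la)))) by ring.
    rewrite <- Rmult_assoc. apply Rmult_le_compat_l. apply Rmult_le_pos; lra. exact Hpb. }
  pose (P := fun l r => ((1 <= l)%nat -> is_residue g (Cminus rho (RtoC (INR l / la))) r) /\ Cmod r <= M * q ^ l).
  assert (Hex : forall l, exists r, P l r).
  { intros l. destruct l as [|l].
    - exists (RtoC 0). split. intros H; lia. rewrite Cmod_0. simpl. lra.
    - destruct (Hkey (S l) ltac:(lia)) as [r [H1 H2]]. exists r. split; auto. }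
  exists (fun l => epsilon (inhabits (RtoC 0)) (P l)).
  assert (Hspec : forall l, P l (epsilon (inhabits (RtoC 0)) (P l))) by (intros l; apply epsilon_spec; apply Hex).
  split.
  - intros l Hl. apply (proj1 (Hspec l)). auto.
  - assert (Hb : forall l, Cmod (epsilon (inhabits (RtoC 0)) (P (S l))) <= M * q * q ^ l).
    { intros l. eapply Rle_trans. apply (proj2 (Hspec (S l))). simpl. lra. }
    assert (Hq1 : Rabs q < 1) by (rewrite Rabs_pos_eq; lra).
    assert (Hgeo : is_series (fun l => M * q * q ^ l) (M * q * / (1 - q))).
    { exact (is_series_scal_l (M * q) _ _ (is_series_geom q Hq1)). }
    assert (Hexs : ex_series (fun l => epsilon (inhabits (RtoC 0)) (P (S l)))).
    { apply (@ex_series_le C_AbsRing C_CompleteNormedModule _ (fun l => M * q * q ^ l)).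
      intros l. change norm with Cmod. apply Hb. eexists. exact Hgeo. }
    destruct Hexs as [Sum HSum]. exists Sum. split. exact HSum.
    assert (X := series_norm_bound _ _ _ _ HSum Hgeo Hb).
    eapply Rle_lt_trans. exact X.
    apply Rmult_lt_reg_r with (1 - q). lra.
    rewrite Rmult_assoc, Rinv_l, Rmult_1_r by lra. nra.
Qed.
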